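(* Let $U=B(c,R)\cap\mathbb{Z}[\mathrm{i}]$ for some $c\in\mathbb{C}$, $R>0$, let $p,q\in\mathbb{Z}[\mathrm{i}]$ be $\mathbb{Z}$-linearly independent, and suppose the configuration $(a_z)_{z\in\mathbb{Z}[\mathrm{i}]}$ has step-period $(p,q)$ in $U$. Then $(a_z)$ has period $(p,q)$ in $U^{\circ r}$, where $r=|p|+|q|$.
   Context: For $\mathbb{Z}$-linearly independent $p_1,p_2\in\mathbb{Z}[\mathrm{i}]$, $\langle p_1,p_2\rangle=\{m_1p_1+m_2p_2:m_i\in\mathbb{Z}\}$. For $U\subseteq\mathbb{Z}[\mathrm{i}]$: $(a_z)$ has period $(p_1,p_2)$ in $U$ if for all $z_1,z_2\in U$ with $z_1-z_2\in\langle p_1,p_2\rangle$ we have $a_{z_1}=a_{z_2}$; $(a_z)$ has step-period $(p_1,p_2)$ in $U$ if whenever $z\in U$ and $z+p_i\in U$ for some $i\in\{1,2\}$, then $a_z=a_{z+p_i}$. For $V\subseteq\mathbb{Z}[\mathrm{i}]$ and $r>0$, $V^{\circ r}=\{z\in V:B(z,r)\cap\mathbb{Z}[\mathrm{i}]\subseteq V\}$, where $B(z,r)$ is the ball of centre $z$ and radius $r$ in $\mathbb{C}$. *)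

(* Defs.v *)
(* Gaussian integers Z[i] are pairs (x,y) : Z*Z, embedded in
   Coquelicot's complex numbers C; distances via Cmod. *)
From Stdlib Require Import Reals ZArith.
From Coquelicot Require Import Coquelicot.
Open Scope R_scope.

Definition gauss := (Z * Z)%type.

Definition gadd (z w : gauss) : gauss := ((fst z + fst w)%Z, (snd z + snd w)%Z).
Definition gsub (z w : gauss) : gauss := ((fst z - fst w)%Z, (snd z - snd w)%Z).
Definition gzscal (m : Z) (z : gauss) : gauss := ((m * fst z)%Z, (m * snd z)%Z).

Definition toC (z : gauss) : C := (IZR (fst z), IZR (snd z)).

Definition Zlin_indep (p1 p2 : gauss) : Prop :=
  forall m1 m2 : Z, gadd (gzscal m1 p1) (gzscal m2 p2) = (0%Z, 0%Z) ->
    m1 = 0%Z /\ m2 = 0%Z.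

Definition in_lattice (p1 p2 w : gauss) : Prop :=
  exists m1 m2 : Z, w = gadd (gzscal m1 p1) (gzscal m2 p2).

Definition gball (c : C) (r : R) (z : gauss) : Prop := Cmod (toC z - c) < r.

Definition has_period {A : Type} (a : gauss -> A) (p1 p2 : gauss)
  (U : gauss -> Prop) : Prop :=
  forall z1 z2, U z1 -> U z2 -> in_lattice p1 p2 (gsub z1 z2) -> a z1 = a z2.

Definition has_step_period {A : Type} (a : gauss -> A) (p1 p2 : gauss)
  (U : gauss -> Prop) : Prop :=
  forall z, U z ->
    (U (gadd z p1) -> a z = a (gadd z p1)) /\
    (U (gadd z p2) -> a z = a (gadd z p2)).

Definition interior_r (V : gauss -> Prop) (r : R) (z : gauss) : Prop :=
  V z /\ forall w, gball (toC z) r w -> V w.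

(* Main.v *)
Require Import Defs.
From Stdlib Require Import Reals ZArith Lia Lra Psatz.
From Coquelicot Require Import Coquelicot.
Open Scope R_scope.

Lemma Cmod_scal (l x y : R) : Cmod (l * x, l * y) = Rabs l * Cmod (x, y).
Proof.
  unfold Cmod; simpl.
  replace ((l*x)*((l*x)*1) + (l*y)*((l*y)*1)) with (l² * (x*(x*1) + y*(y*1))) by (unfold Rsqr; ring).
  rewrite sqrt_mult; [|apply Rle_0_sqr|nra]. now rewrite sqrt_Rsqr_abs.
Qed.

Lemma conv (x1 x2 y1 y2 l R0 : R) (c : C) :
  Cmod ((x1, x2) - c) < R0 -> Cmod ((y1, y2) - c) < R0 -> 0 <= l <= 1 ->
  Cmod ((x1 + l * (y1 - x1), x2 + l * (y2 - x2)) - c) < R0.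
Proof.
  destruct c as [c1 c2]. intros Hx Hy Hl.
  change ((x1,x2) - (c1,c2))%C with (x1 + - c1, x2 + - c2) in Hx.
  change ((y1,y2) - (c1,c2))%C with (y1 + - c1, y2 + - c2) in Hy.
  change (((x1 + l * (y1 - x1))%R, (x2 + l * (y2 - x2))%R) - (c1,c2))%C with
    (x1 + l * (y1 - x1) + - c1, x2 + l * (y2 - x2) + - c2).
  replace (x1 + l * (y1 - x1) + - c1, x2 + l * (y2 - x2) + - c2) with
    (((1-l) * (x1 + - c1), (1-l) * (x2 + - c2))%R + (l * (y1 + -c1), l * (y2 + - c2))%R)%C
    by (unfold Cplus; simpl; f_equal; ring).
  eapply Rle_lt_trans; [apply Cmod_triangle|].
  rewrite !Cmod_scal, !Rabs_pos_eq by lra.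
  destruct (Req_dec l 0). subst. nra. nra.
Qed.

Lemma strict (u1 u2 v1 v2 : R) : u1 * v2 - u2 * v1 <> 0 ->
  Cmod (v1 - u1, v2 - u2) < Cmod (u1, u2) + Cmod (v1, v2).
Proof.
  intros Hd. unfold Cmod; simpl.
  set (A := u1 * (u1 * 1) + u2 * (u2 * 1)).
  set (B := v1 * (v1 * 1) + v2 * (v2 * 1)).
  set (S := (v1 - u1) * ((v1 - u1) * 1) + (v2 - u2) * ((v2 - u2) * 1)).
  assert (HA : 0 <= A) by (unfold A; nra).
  assert (HB : 0 <= B) by (unfold B; nra).
  assert (Hd2 := Rsqr_pos_lt _ Hd). unfold Rsqr in Hd2.
  assert (Hlt : Rabs (u1*v1+u2*v2) < sqrt A * sqrt B).
  { rewrite <- sqrt_mult by auto. rewrite <- sqrt_Rsqr_abs. apply sqrt_lt_1_alt.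
    unfold Rsqr, A, B. split. apply Rle_0_sqr.
    replace ((u1 * (u1 * 1) + u2 * (u2 * 1)) * (v1 * (v1 * 1) + v2 * (v2 * 1))) with
      ((u1 * v1 + u2 * v2) * (u1 * v1 + u2 * v2) + (u1 * v2 - u2 * v1) * (u1 * v2 - u2 * v1)) by ring.
    lra. }
  assert (Hab := Rle_abs (- (u1*v1+u2*v2))). rewrite Rabs_Ropp in Hab.
  assert (HsA := sqrt_sqrt A HA). assert (HsB := sqrt_sqrt B HB).
  assert (0 <= sqrt A) by apply sqrt_pos. assert (0 <= sqrt B) by apply sqrt_pos.
  rewrite <- (sqrt_square (sqrt A + sqrt B)) by lra.
  assert (HS : S = A + B - 2 * (u1*v1+u2*v2)) by (unfold S, A, B; ring).
  assert (HS0 : 0 <= S) by (unfold S; apply Rplus_le_le_0_compat; rewrite Rmult_1_r; apply Rle_0_sqr).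
  clearbody A B S.
  apply sqrt_lt_1_alt. split. exact HS0.
  replace ((sqrt A + sqrt B) * (sqrt A + sqrt B)) with (sqrt A * sqrt A + sqrt B * sqrt B + 2 * (sqrt A * sqrt B)) by ring.
  rewrite HsA, HsB, HS. lra.
Qed.

Lemma det_nz (p q : gauss) : Zlin_indep p q ->
  (fst p * snd q - snd p * fst q <> 0)%Z.
Proof.
  destruct p as [p1 p2], q as [q1 q2]; simpl. intros H Hd.
  destruct (H q2 (- p2)%Z) as [E1 E2].
  { unfold gadd, gzscal; simpl. f_equal; lia. }
  assert (p2 = 0%Z) by lia; assert (q2 = 0%Z) by lia; subst. destruct (H q1 (- p1)%Z) as [E3 E4].
  { unfold gadd, gzscal; simpl. f_equal; lia. }
  assert (p1 = 0%Z) by lia; assert (q1 = 0%Z) by lia; subst. destruct (H 1%Z 0%Z) as [E5 _].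
  { unfold gadd, gzscal; simpl. f_equal; lia. }
  lia.
Qed.

Lemma Rdiv01 (x y : R) : 0 <= x -> x <= y -> 0 < y -> 0 <= x / y <= 1.
Proof.
  intros. split.
  - unfold Rdiv. apply Rmult_le_pos; [lra| left; apply Rinv_0_lt_compat; lra].
  - apply Rmult_le_reg_r with y; [lra|]. unfold Rdiv. rewrite Rmult_assoc, Rinv_l, Rmult_1_r by lra. lra.
Qed.

Lemma core {A : Type} (a : gauss -> A) c R0 P Q r :
 (forall z, gball c R0 z -> gball c R0 (gadd z P) -> a z = a (gadd z P)) ->
 (forall z, gball c R0 z -> gball c R0 (gadd z Q) -> a z = a (gadd z Q)) ->
 Cmod (toC (gsub Q P)) < r ->
 forall z1 z2 n1 n2, (0 <= n1)%Z -> (0 <= n2)%Z ->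
 interior_r (gball c R0) r z1 -> interior_r (gball c R0) r z2 ->
 gsub z1 z2 = gadd (gzscal n1 P) (gzscal n2 Q) -> a z1 = a z2.
Proof.
  intros HP HQ Hr z1 z2 n1 n2 H1 H2 [Iz1 Bz1] [Iz2 Bz2] Heq.
  assert (Sh : forall z, (forall w, gball (toC z) r w -> gball c R0 w) ->
             gball c R0 (gadd z (gsub Q P))).
  { intros z Hz. apply Hz. unfold gball.
    replace (toC (gadd z (gsub Q P)) - toC z)%C with (toC (gsub Q P)); auto.
    destruct z, Q, P; unfold toC, gadd, gsub; simpl.
    unfold Cminus, Cplus, Copp; simpl. rewrite !plus_IZR, !minus_IZR. f_equal; ring. }
  assert (S1 := Sh z1 Bz1). assert (S2 := Sh z2 Bz2). clear Sh Bz1 Bz2.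
  destruct z1 as [x1 y1], z2 as [x2 y2], P as [p1 p2], Q as [q1 q2].
  unfold gsub, gadd, gzscal in Heq, S1, S2; simpl in Heq, S1, S2. injection Heq as E1 E2.
  destruct (Z.eq_dec (n1 + n2) 0) as [HN|HN].
  { assert (n1 = 0%Z) by lia. assert (n2 = 0%Z) by lia. subst.
    replace x1 with x2 by lia. replace y1 with y2 by lia. reflexivity. }
  set (N := (n1 + n2)%Z) in *.
  assert (HNp : (0 < N)%Z) by lia.
  set (Ak := fun k => (k * n1 / N)%Z).
  set (X := fun k => ((x2 + (Ak k * p1 + (k - Ak k) * q1))%Z,
                      (y2 + (Ak k * p2 + (k - Ak k) * q2))%Z) : gauss).
  assert (Dk : forall k, (N * Ak k <= k * n1 < N * Ak k + N)%Z).
  { intro k. unfold Ak. assert (HH := Z.div_mod (k * n1) N ltac:(lia)).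
    assert (HH2 := Z.mod_pos_bound (k * n1) N HNp). lia. }
  assert (HB : forall k, (0 <= k <= N)%Z -> gball c R0 (X k)).
  { intros k Hk. unfold gball, X.
    set (m := (k * n1 - N * Ak k)%Z).
    assert (Hm : (0 <= m <= N)%Z) by (specialize (Dk k); lia).
    assert (Ek : (k * n1 = N * Ak k + m)%Z) by (unfold m; lia).
    clearbody m.
    set (t := IZR k / IZR N). set (s := IZR m / IZR N).
    assert (HNR : 0 < IZR N) by (apply IZR_lt; lia).
    assert (Ht : 0 <= t <= 1) by (apply Rdiv01; [apply IZR_le; lia | apply IZR_le; lia | auto]).
    assert (Hs : 0 <= s <= 1) by (apply Rdiv01; [apply IZR_le; lia | apply IZR_le; lia | auto]).
    assert (U2 := conv _ _ _ _ s R0 c Iz2 S2 Hs).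
    assert (U1 := conv _ _ _ _ s R0 c Iz1 S1 Hs).
    assert (V := conv _ _ _ _ t R0 c U2 U1 Ht).
    match type of V with Cmod (?v - c) < _ => replace (toC _) with v; [exact V|] end.
    clear V U1 U2.
    set (ak := Ak k) in *. clearbody ak.
    assert (Rak : IZR ak = (IZR k * IZR n1 - IZR m) / IZR N).
    { apply Rmult_eq_reg_r with (IZR N); [|lra]. unfold Rdiv. rewrite Rmult_assoc, Rinv_l, Rmult_1_r by lra.
      rewrite <- !mult_IZR, <- minus_IZR. f_equal. lia. }
    assert (Rx1 : IZR x1 = IZR x2 + IZR n1 * IZR p1 + IZR n2 * IZR q1).
    { rewrite <- !mult_IZR, <- !plus_IZR. f_equal. lia. }
    assert (Ry1 : IZR y1 = IZR y2 + IZR n1 * IZR p2 + IZR n2 * IZR q2).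
    { rewrite <- !mult_IZR, <- !plus_IZR. f_equal. lia. }
    assert (RN : IZR N = IZR n1 + IZR n2) by (unfold N; apply plus_IZR).
    unfold toC; simpl. unfold t, s. rewrite !plus_IZR, !minus_IZR, !mult_IZR, !minus_IZR.
    rewrite Rx1, Ry1, Rak. rewrite RN in *. f_equal; field; lra. }
  assert (HS : forall k, (0 <= k < N)%Z -> X (k + 1)%Z = gadd (X k) (p1, p2) \/ X (k + 1)%Z = gadd (X k) (q1, q2)).
  { intros k Hk. assert (D0 := Dk k). assert (D1 := Dk (k + 1)%Z).
    assert (Hd : Ak (k + 1)%Z = (Ak k + 1)%Z \/ Ak (k + 1)%Z = Ak k).
    { set (u := Ak k) in *. set (v := Ak (k + 1)%Z) in *. clearbody u v.
      assert (v < u + 2)%Z by nia. assert (u < v + 1)%Z by nia. lia. }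
    unfold X, gadd; simpl. destruct Hd as [Hd|Hd]; rewrite Hd; [left|right]; f_equal; ring. }
  assert (HC : forall n : nat, (Z.of_nat n <= N)%Z -> a (X (Z.of_nat n)) = a (x2, y2)).
  { induction n as [|n IH]; intros Hn.
    - unfold X. simpl. replace (Ak 0%Z) with 0%Z by reflexivity. f_equal. f_equal; ring.
    - rewrite Nat2Z.inj_succ in *. rewrite <- Z.add_1_r in *. rewrite <- IH by lia.
      destruct (HS (Z.of_nat n) ltac:(lia)) as [E|E]; rewrite E; symmetry.
      + apply HP; [apply HB; lia| rewrite <- E; apply HB; lia].
      + apply HQ; [apply HB; lia| rewrite <- E; apply HB; lia]. }
  assert (HXN : X N = (x1, y1)).
  { unfold X. replace (Ak N) with n1.
    - f_equal; unfold N; lia.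
    - unfold Ak. rewrite Z.mul_comm, Z.div_mul; lia. }
  rewrite <- HXN, <- (Z2Nat.id N) by lia. apply HC. lia.
Qed.

Lemma sign_dec (m : Z) : exists s n, (s = 1 \/ s = -1)%Z /\ (0 <= n)%Z /\ m = (s * n)%Z.
Proof.
  destruct (Z_lt_le_dec m 0).
  - exists (-1)%Z, (- m)%Z. lia.
  - exists 1%Z, m. lia.
Qed.

Lemma step_scal {A : Type} (a : gauss -> A) U p s : (s = 1 \/ s = -1)%Z ->
  (forall z, U z -> U (gadd z p) -> a z = a (gadd z p)) ->
  (forall z, U z -> U (gadd z (gzscal s p)) -> a z = a (gadd z (gzscal s p))).
Proof.
  intros [-> | ->] H z Hz Hz'.
  - replace (gzscal 1 p) with p in * by (destruct p as [x y]; unfold gzscal; cbn [fst snd]; f_equal; lia).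
    auto.
  - set (w := gadd z (gzscal (-1) p)) in *.
    assert (Ew : gadd w p = z) by (unfold w; destruct z, p; unfold gadd, gzscal; cbn [fst snd]; f_equal; lia).
    rewrite <- Ew at 1. symmetry. apply H; auto. now rewrite Ew.
Qed.

Lemma Cmod_scal_toC p s : (s = 1 \/ s = -1)%Z -> Cmod (toC (gzscal s p)) = Cmod (toC p).
Proof.
  intros Hs. destruct p as [p1 p2]. unfold toC, gzscal; simpl. rewrite !mult_IZR.
  assert (IZR s * IZR s = 1) by (destruct Hs as [-> | ->]; simpl; lra).
  unfold Cmod; simpl. f_equal.
  replace (IZR s * IZR p1 * (IZR s * IZR p1 * 1) + IZR s * IZR p2 * (IZR s * IZR p2 * 1))
    with ((IZR s * IZR s) * (IZR p1 * (IZR p1 * 1) + IZR p2 * (IZR p2 * 1))) by ring.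
  rewrite H. ring.
Qed.

Lemma strict_g (u v : gauss) : (fst u * snd v - snd u * fst v <> 0)%Z ->
  Cmod (toC (gsub v u)) < Cmod (toC u) + Cmod (toC v).
Proof.
  destruct u as [u1 u2], v as [v1 v2]; simpl; intros Hd.
  unfold toC, gsub; simpl. rewrite !minus_IZR. apply strict.
  rewrite <- !mult_IZR, <- minus_IZR. apply not_0_IZR. exact Hd.
Qed.

Theorem lemma4p4 (A : Type) (a : gauss -> A) (c : C) (R0 : R) (p q : gauss) :
  0 < R0 ->
  Zlin_indep p q ->
  has_step_period a p q (gball c R0) ->
  has_period a p q (interior_r (gball c R0) (Cmod (toC p) + Cmod (toC q))).
Proof.
  intros HR Hind Hst z1 z2 H1 H2 [m1 [m2 Heq]].
  destruct (sign_dec m1) as [s1 [n1 [Hs1 [Hn1 ->]]]].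
  destruct (sign_dec m2) as [s2 [n2 [Hs2 [Hn2 ->]]]].
  assert (Hd := det_nz p q Hind).
  apply (core a c R0 (gzscal s1 p) (gzscal s2 q) (Cmod (toC p) + Cmod (toC q))) with n1 n2; auto.
  - apply step_scal; auto. intros z Hz. apply (proj1 (Hst z Hz)).
  - apply step_scal; auto. intros z Hz. apply (proj2 (Hst z Hz)).
  - rewrite <- (Cmod_scal_toC p s1), <- (Cmod_scal_toC q s2) by auto.
    apply strict_g. destruct p, q; simpl in *.
    destruct Hs1 as [-> | ->], Hs2 as [-> | ->]; lia.
  - rewrite Heq. destruct p, q; unfold gadd, gzscal; simpl. f_equal; ring.
Qed.
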